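(* Let $T=(V,E)$ be a finite tree, $\delta\in(0,1)$, and let $\mathcal H=\{\{i,j\}:\{i,j\}\in E\}$. Then for every $i\in V$, $$\mu_i(V;r^{v^T}_{\mathcal H})=\sum_{\substack{\{p,q\}\subseteq V,\ p\neq q\\ i\text{ lies on the }T\text{-path from }p\text{ to }q}}\frac{2\,\delta^{t_{pq}(T)}}{t_{pq}(T)+1},$$ where $t_{pq}(T)$ is the distance between $p$ and $q$ in $T$ (and the endpoints $p,q$ count as lying on the path).
   Context: For a finite simple undirected graph $G=(V,E)$ and $\delta\in(0,1)$: for $S\subseteq V$, $G[S]$ is the induced subgraph and $t_{ij}(G[S])$ the shortest-path distance in $G[S]$ ($=\infty$ if $i,j$ are disconnected there), with $\delta^\infty:=0$. The distance-polynomial worth is $v^G(S):=\sum_{i\in S}\sum_{j\in S,\,j\neq i}\delta^{t_{ij}(G[S])}$. A conference structure is a family $\mathcal H$ of subsets of $V$ of size $\ge2$; for $C\subseteq V$, $C/\mathcal H$ is the partition of $C$ into classes of the relation ''$i=j$, or there are $S_1,\dots,S_m\in\mathcal H$ all contained in $C$ with $i\in S_1$, $j\in S_m$, $S_k\cap S_{k+1}\neq\varnothing$''. The restricted worth is $r^{v^G}_{\mathcal H}(C):=\sum_{B\in C/\mathcal H}v^G(B)$. For a TU game $u$ on a finite player set $N$, $\mu_i(N;u):=\sum_{S\subseteq N\setminus\{i\}}\frac{|S|!(|N|-|S|-1)!}{|N|!}\bigl(u(S\cup\{i\})-u(S)\bigr)$ (the Shapley value; applied to $r^{v^G}_{\mathcal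 H}$ it is the Myerson value). *)

(* Defs.v *)
From HB Require Import structures.
From mathcomp Require Import all_boot all_order all_algebra.
Set Implicit Arguments. Unset Strict Implicit. Unset Printing Implicit Defensive.
Import Order.TTheory GRing.Theory Num.Theory.
Local Open Scope ring_scope.

Section Defs.
Variable V : finType.
Variable e : rel V.

Definition simple_graph := symmetric e /\ irreflexive e.

(* A graph cycle: a closed walk through >= 3 pairwise distinct vertices. *)
Definition acyclic := forall c : seq V, ~~ ((2 < size c)%N && ucycleb e c).
Definition connected := forall x y : V, connect e x y.
Definition is_tree := [/\ simple_graph, connected & acyclic].

Definition walkb (S : {set V}) (i j : V) (n : nat) : bool :=
  [exists s : n.-tuple V,
     [&& path e i s, last i s == j & all (fun x => x \in S) (i :: s)]].

(* Shortest-path distance in G[S]; None stands for infinity.  A shortest walk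
   repeats no vertex, hence has length < #|V|, so the bounded search is exact. *)
Definition dist (S : {set V}) (i j : V) : option nat :=
  let k := find (walkb S i j) (iota 0 #|V|) in
  if (k < #|V|)%N then Some k else None.

Variable R : realFieldType.
Variable delta : R.

(* delta ^ t with delta ^ infinity := 0 *)
Definition dpow (t : option nat) : R :=
  if t is Some n then delta ^+ n else 0.

Definition worth (S : {set V}) : R :=
  \sum_(i in S) \sum_(j in S | j != i) dpow (dist S i j).

Definition conference_structure (H : {set {set V}}) :=
  forall S, S \in H -> (2 <= #|S|)%N.

Definition adjH (H : {set {set V}}) (C : {set V}) : rel V :=
  fun x y => [exists S in H, [&& S \subset C, x \in S & y \in S]].

Definition partH (H : {set {set V}}) (C : {set V}) : {set {set V}} :=
  [set [set y in C | connect (adjH H C) x y] | x in C].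

Definition restricted (H : {set {set V}}) (C : {set V}) : R :=
  \sum_(B in partH H C) worth B.

(* Shapley value on player set N = V (whole type) *)
Definition shapley (u : {set V} -> R) (i : V) : R :=
  \sum_(S : {set V} | i \notin S)
     ((#|S|`! * (#|V| - #|S| - 1)`!)%:R / (#|V|`!)%:R) * (u (i |: S) - u S).

Definition edgeH : {set {set V}} := [set [set x; y] | x in V, y in V & e x y].

Definition on_path (i p q : V) : bool :=
  [exists n : 'I_#|V|, exists s : n.-tuple V,
     [&& path e p s, last p s == q, uniq (p :: s) & i \in p :: s]].

Definition pair_term (t : option nat) : R :=
  if t is Some n then 2 * delta ^+ n / (n.+1)%:R else 0.

End Defs.

(* Main.v *)
Require Import Defs.
From HB Require Import structures.
From mathcomp Require Import all_boot all_order all_algebra.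
From mathcomp Require Import ring zify.
Set Implicit Arguments. Unset Strict Implicit. Unset Printing Implicit Defensive.
Import Order.TTheory GRing.Theory Num.Theory.
Local Open Scope ring_scope.

Lemma fact_neq0 (R : realFieldType) n : (n`!)%:R != 0 :> R.
Proof. by rewrite pnatr_eq0 -lt0n fact_gt0. Qed.

Lemma one_nat_neq0 (R : realFieldType) n : 1 + n%:R != 0 :> R.
Proof. by rewrite addrC natr1 pnatr_eq0. Qed.

Lemma hsum (R : realFieldType) (b m : nat) :
  \sum_(k < m.+1) (k + b)`!%:R / (k`!)%:R =
  (m + b.+1)`!%:R / (b.+1 * m`!)%:R :> R.
Proof.
elim: m => [|m IH].
  rewrite big_ord1 /= !add0n fact0 muln1 factS natrM.
  have := fact_neq0 R b => h2; field; exact: one_nat_neq0.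
rewrite big_ord_recr /= IH.
have E1 : (m + b.+1)`! = (m.+1 + b)`! by rewrite addnS addSn.
have E2 : (m.+1 + b.+1)`! = (m.+2 + b) * (m.+1 + b)`! by rewrite addnS factS addSn.
rewrite E1 E2 (factS m) !natrM.
have := fact_neq0 R m; have := fact_neq0 R (m.+1 + b).
move=> h3 h4.
rewrite !natrD; field; by rewrite h4 !one_nat_neq0.
Qed.

Lemma comb (R : realFieldType) m b :
  \sum_(k < m.+1) 'C(m, k)%:R * ((k + b)`! * (m - k)`!)%:R / (m + b.+1)`!%:R
  = 1 / (b.+1)%:R :> R.
Proof.
have -> : \sum_(k < m.+1) 'C(m, k)%:R * ((k + b)`! * (m - k)`!)%:R / (m + b.+1)`!%:R
   = (m`!)%:R / (m + b.+1)`!%:R * \sum_(k < m.+1) (k + b)`!%:R / (k`!)%:R :> R.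
  rewrite mulr_sumr; apply: eq_bigr => k _.
  have hk : (k <= m)%N by rewrite -ltnS.
  have := bin_fact hk => /(congr1 (fun n => n%:R : R)); rewrite !natrM => <-.
  have := fact_neq0 R k; have := fact_neq0 R (m - k); have := fact_neq0 R (m + b.+1).
  move=> h1 h2 h3; field; by rewrite h1 h3.
rewrite hsum natrM.
have := fact_neq0 R m; have := fact_neq0 R (m + b.+1).
move=> h1 h2; field; by rewrite h1 h2 one_nat_neq0.
Qed.

Lemma sum_subsets (R : realFieldType) (T : finType) (X : {set T}) (f : nat -> R) :
  \sum_(A : {set T} | A \subset X) f #|A| = \sum_(k < #|X|.+1) 'C(#|X|, k)%:R * f k.
Proof.
rewrite (partition_big (fun A : {set T} => inord #|A| : 'I_(#|X|.+1)) xpredT) //=.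
apply: eq_bigr => k _.
have hA : forall A : {set T}, A \subset X -> (#|A| < #|X|.+1)%N.
  by move=> A AX; rewrite ltnS subset_leq_card.
rewrite (eq_bigl [in [set A : {set T} | A \subset X & #|A| == k]]); last first.
  move=> A; rewrite !inE; case AX: (A \subset X) => //=.
  by rewrite -(inj_eq val_inj) /= inordK ?hA.
rewrite (eq_bigr (fun _ => f k)); last by move=> A; rewrite !inE => /andP[_ /eqP ->].
by rewrite sumr_const cards_draws mulr_natl.
Qed.

Lemma subU1_D1 (T : finType) (A S : {set T}) i :
  i \notin S -> (A \subset i |: S) = (A :\ i \subset S).
Proof.
move=> iS; apply/subsetP/subsetP => H x; rewrite !inE.
  by case/andP=> xi /H; rewrite !inE (negPf xi).
move=> xA; case: (eqVneq x i) => [-> //|xi].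
by rewrite H ?orbT // !inE xi.
Qed.

Lemma subU1_nin (T : finType) (A S : {set T}) i :
  i \notin A -> (A \subset i |: S) = (A \subset S).
Proof.
move=> iA; apply/subsetP/subsetP => H x xA.
  by move: (H x xA); rewrite !inE; case: eqP xA iA => // -> ->.
by rewrite !inE H ?orbT.
Qed.

Lemma setDUK' (T : finType) (A B : {set T}) : A \subset B -> (B :\: A) :|: A = B.
Proof.
move/subsetP=> h; apply/setP=> x; rewrite !inE.
by case xA: (x \in A); rewrite ?orbT ?(h x xA) //= orbF.
Qed.

Lemma unanimity (V : finType) (R : realFieldType) (A : {set V}) (c : R) (i : V) :
  shapley (fun S => if A \subset S then c else 0) i =
  if i \in A then c / #|A|%:R else 0.
Proof.
rewrite /shapley; case: ifPn => iA; last first.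
  by apply: big1 => S iS; rewrite subU1_nin // subrr mulr0.
pose coef (s : nat) : R := ((s`! * (#|V| - s - 1)`!)%:R / (#|V|`!)%:R).
pose F (S : {set V}) := if A :\ i \subset S then c * coef #|S| else 0.
transitivity (\sum_(S : {set V} | i \notin S) F S).
  apply: eq_bigr => S iS; rewrite /F; rewrite subU1_D1 //.
  have -> : (A \subset S) = false.
    by apply/negP => /subsetP /(_ i iA); rewrite (negPf iS).
  by case: ifP; rewrite ?subr0 ?subrr ?mulr0 // mulrC.
rewrite -big_mkcondr -mulr_sumr.
set A' := A :\ i.
rewrite (reindex_onto (fun T => T :|: A') (fun S => S :\: A')) /=; last first.

  by move=> S /andP[_ AS]; rewrite setDUK'.
have iA' : i \notin A' by rewrite !inE eqxx.
rewrite (eq_bigl (fun T : {set V} => T \subset ~: A)); last first.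
  move=> T; rewrite subsetUr andbT setDUl setDv setU0.
  apply/idP/idP.
    case/andP=> iT /eqP TE; apply/subsetP=> x xT; rewrite inE.
    move: xT; rewrite -TE !inE => /andP[xA' xT]; apply/negP=> xA.
    move: xA'; rewrite xA andbT negbK => /eqP xi.
    by move: iT; rewrite !inE -xi xT.
  move/subsetP=> TA; apply/andP; split.
    rewrite !inE eqxx /= orbF; apply/negP=> /TA; by rewrite inE iA.
  apply/eqP/setP=> x; rewrite !inE; case xT: (x \in T); rewrite ?andbF //.
  by move: (TA x xT); rewrite inE => /negPf ->; rewrite andbF.
rewrite (eq_bigr (fun T : {set V} => coef (#|T| + #|A'|))); last first.
  move=> T TA; congr coef; have := cardsUI T A'.
  have -> : T :&: A' = set0.
    apply/setP=> x; rewrite !inE; apply/negP=> /andP[xT /andP[_ xA]].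
    by move: (subsetP TA x xT); rewrite inE xA.
  by rewrite cards0 addn0.
rewrite (sum_subsets (~: A) (fun k => coef (k + #|A'|))).
have cA : #|A| = #|A'|.+1 by rewrite (cardsD1 i A) iA.
have cV : #|V| = #|~: A| + #|A'|.+1 by rewrite -(cardsC A) cA addnC.
set m := #|~: A|; set b := #|A'|.
rewrite cA (eq_bigr (fun k : 'I_m.+1 => 'C(m, k)%:R * ((k + b)`! * (m - k)`!)%:R / (m + b.+1)`!%:R)).
  by rewrite comb mul1r.
move=> k _; rewrite /coef cV mulrA; congr (_ * (_ * _)%:R / _).
have := ltn_ord k; rewrite /m /b => hk; apply: congr1; lia.
Qed.

Lemma shapley_ext (V : finType) (R : realFieldType) (u u' : {set V} -> R) i :
  u =1 u' -> shapley u i = shapley u' i.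
Proof. by move=> h; apply: eq_bigr => S _; rewrite !h. Qed.

Lemma shapley_sum2 (V : finType) (R : realFieldType) (F : V -> V -> {set V} -> R) i :
  shapley (fun S => \sum_p \sum_(q | q != p) F p q S) i =
  \sum_p \sum_(q | q != p) shapley (F p q) i.
Proof.
rewrite /shapley.
pose k (S : {set V}) : R := (#|S|`! * (#|V| - #|S| - 1)`!)%:R / (#|V|`!)%:R.
transitivity (\sum_(S : {set V} | i \notin S) \sum_p \sum_(q | q != p) k S * (F p q (i |: S) - F p q S)).
  apply: eq_bigr => S _; rewrite -sumrB mulr_sumr; apply: eq_bigr => p _.
  by rewrite -sumrB mulr_sumr.
rewrite exchange_big; apply: eq_bigr => p _; rewrite exchange_big //.
Qed.
Local Close Scope ring_scope.
Lemma split_first (T : eqType) (P : pred T) (s : seq T) :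
  has P s -> exists u y w, [/\ s = u ++ y :: w, ~~ has P u & P y].
Proof.
elim: s => //= x s IH; case Px: (P x) => /= H.
  by exists [::], x, s.
have [u [y [w [-> Hu Py]]]] := IH H.
by exists (x :: u), y, w; rewrite /= Px.
Qed.

Section Tree.
Variable V : finType.
Variable e : rel V.
Hypothesis sym : symmetric e.
Hypothesis acyc : acyclic e.

Lemma nocycle p x x' t t' :
  path e p (x :: t) -> path e p (x' :: t') ->
  uniq (p :: x :: t) -> uniq (p :: x' :: t') ->
  last x t = last x' t' -> x != x' -> False.
Proof.
set s := x :: t; set s' := x' :: t'.
move=> Hs Hs' Us Us' El nx.
have hs : has (mem s') s.
  apply/hasP; exists (last x t); first exact: mem_last.
  by rewrite El /= mem_last.
have [u [y [w [Es Hu ys']]]] := split_first hs.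
have hy : has (pred1 y) s' by apply/hasP; exists y => //=.
have [u' [y' [w' [Es' Hu' /eqP yy]]]] := split_first hy.
subst y'.
suff [H1 H2] : (2 < size (p :: u ++ y :: rev u'))%N /\ ucycleb e (p :: u ++ y :: rev u').
  by have := acyc (p :: u ++ y :: rev u'); rewrite H1 H2.
split.
- rewrite /= size_cat /= size_rev.
  have : (0 < size u + size u')%N.
    rewrite lt0n addn_eq0; apply/negP => /andP[/eqP/size0nil u0 /eqP/size0nil u'0].
    move: Es Es'; rewrite u0 u'0 /s /s' /= => [[Exy _] [Ex'y _]].
    by rewrite Exy Ex'y eqxx in nx.
  by rewrite addnS !ltnS.
- rewrite /ucycleb; apply/andP; split.
  + rewrite /= rcons_cat cat_path /=.
    move: Hs; rewrite -/s Es cat_path /= => /and3P[-> -> _] /=.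
    have : path e p (rcons u' y).
      by move: Hs'; rewrite -/s' Es' cat_path /= => /and3P[H1 H2 _]; rewrite rcons_path H1 H2.
    rewrite -(eq_path (e := fun z w => e w z)); last by move=> a b; rewrite sym.
    rewrite -rev_path last_rcons belast_rcons rev_cons.
    by [].
  + have Up : uniq (p :: rcons u y).
      have E : p :: u ++ y :: w = (p :: rcons u y) ++ w by rewrite /= cat_rcons.
      by move: Us; rewrite -/s Es E cat_uniq => /andP[].
    have Uu' : uniq u'.
      by move: Us'; rewrite -/s' Es' /= cat_uniq => /andP[_ /andP[]].
    have yu' : y \notin u'.
      by apply/negP => yu; move/hasPn: Hu' => /(_ y yu) /=; rewrite eqxx.
    have pu' : p \notin u'.
      by move: Us'; rewrite -/s' Es' /= mem_cat negb_or => /andP[/andP[]].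
    have -> : p :: u ++ y :: rev u' = (p :: rcons u y) ++ rev u' by rewrite /= cat_rcons.
    rewrite cat_uniq Up rev_uniq Uu' andbT.
    apply/hasPn => z; rewrite mem_rev => zu'.
    rewrite /= in_cons mem_rcons in_cons negb_or; apply/andP; split.
      by apply: contraNneq pu' => <-.
    rewrite negb_or; apply/andP; split; first by apply: contraNneq yu' => <-.
    apply/negP => zu; move/hasPn: Hu => /(_ z zu); rewrite /=.
    by rewrite Es' mem_cat zu'.
Qed.

Lemma path_uniq s : forall p s', path e p s -> path e p s' ->
  uniq (p :: s) -> uniq (p :: s') -> last p s = last p s' -> s = s'.
Proof.
elim: s => [|x t IH] p [|x' t'] //=.
- move=> _ _ _ /andP[pn _] El; exfalso; move: pn; rewrite El.
  by rewrite (mem_last x' t').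
- move=> _ _ /andP[pn _] _ El; exfalso; move: pn; rewrite -El.
  by rewrite (mem_last x t).
- move=> /andP[ex Ht] /andP[ex' Ht'] /andP[pn Ut] /andP[pn' Ut'] El.
  case: (eqVneq x x') => [exx|nx]; last first.
    exfalso; apply: (@nocycle p x x' t t') => //=.
    + by rewrite ex Ht.
    + by rewrite ex' Ht'.
    + by rewrite pn Ut.
    + by rewrite pn' Ut'.
  subst x'; congr (_ :: _); apply: (IH x) => //.
Qed.

Lemma walk_sub (C : {set V}) p n s0 : path e p s0 -> uniq (p :: s0) ->
  walkb e C p (last p s0) n -> {subset p :: s0 <= C} /\ (size s0 <= n)%N.
Proof.
move=> Hs0 Us0 /existsP [st /and3P [Hst /eqP Lst /allP Ast]].
case: (shortenP Hst) Lst => s' Hs' Us' Sub Lst.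
have E : s' = s0 by apply: (@path_uniq s' p s0).
subst s'; split.
  move=> x; rewrite in_cons => /orP[/eqP ->|xs]; apply: Ast; first exact: mem_head.
  by rewrite in_cons (Sub x xs) orbT.
rewrite -(size_tuple st); apply: uniq_leq_size => //.
by case/andP: Us0.
Qed.

Lemma walk_full (C : {set V}) p s0 : path e p s0 -> {subset p :: s0 <= C} ->
  walkb e C p (last p s0) (size s0).
Proof.
move=> H Sub; apply/existsP; exists (in_tuple s0); apply/and3P; split => //.
by apply/allP => x; exact: Sub.
Qed.

Lemma find_eq (P : pred nat) N k : (k < N)%N -> P k ->
  (forall j, (j < k)%N -> ~~ P j) -> find P (iota 0 N) = k.
Proof.
move=> kN Pk Hj.
rewrite -(subnKC (ltnW kN)) iotaD add0n find_cat.
have -> : has P (iota 0 k) = false.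
  by apply/negbTE/hasPn => j; rewrite mem_iota add0n => /andP[_ /Hj].
rewrite size_iota.
have : (0 < N - k)%N by rewrite subn_gt0.
by case: (N - k) => // m _ /=; rewrite Pk addn0.
Qed.

Lemma size_lt_card (p : V) s0 : uniq (p :: s0) -> (size s0 < #|V|)%N.
Proof.
move=> U; have := card_uniqP U => /= <-; exact: max_card.
Qed.

Lemma dist_tree (C : {set V}) p s0 : path e p s0 -> uniq (p :: s0) ->
  dist e C p (last p s0) = if all (mem C) (p :: s0) then Some (size s0) else None.
Proof.
move=> H U; rewrite /dist; case Hall: (all (mem C) (p :: s0)).
  rewrite (@find_eq _ _ (size s0)) ?(size_lt_card U) //.
    by apply: walk_full => // x xs; move/allP: Hall => /(_ x xs).
  move=> j jlt; apply/negP => /walk_sub [] // _; by rewrite leqNgt jlt.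
rewrite hasNfind ?size_iota ?ltnn //.
apply/hasPn => n _; apply/negP => /walk_sub [] // Sub _.
by move: Hall; rewrite (introT allP Sub).
Qed.

Lemma on_path_tree x p s0 : path e p s0 -> uniq (p :: s0) ->
  on_path e x p (last p s0) = (x \in p :: s0).
Proof.
move=> H U; apply/idP/idP.
  case/existsP => n /existsP [st /and4P [Hst /eqP Lst Ust xin]].
  have E : tval st = s0 by apply: (@path_uniq st p s0).
  by rewrite -E.
move=> xin; apply/existsP; exists (Ordinal (size_lt_card U)).
by apply/existsP; exists (in_tuple s0); apply/and4P; split => //.
Qed.

Hypothesis conn : connected e.

Lemma upath_ex p q : exists s, [/\ path e p s, uniq (p :: s) & last p s = q].
Proof.
have /connectP [s Hs ->] := conn p q.
by case: (shortenP Hs) => s' Hs' Us' _; exists s'.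
Qed.

Definition pset p q : {set V} := [set x | on_path e x p q].

Lemma pset_dist (C : {set V}) p q :
  dist e C p q = if pset p q \subset C then Some (#|pset p q|.-1) else None.
Proof.
have [s0 [H U <-]] := upath_ex p q.
have E : pset p (last p s0) = [set x in p :: s0].
  by apply/setP => x; rewrite !inE on_path_tree.
rewrite dist_tree // E cardsE (card_uniqP U) /=.
have -> : ([set x in p :: s0] \subset C) = all (mem C) (p :: s0).
  apply/subsetP/allP => h x; move: (h x); rewrite inE; auto.
by [].
Qed.

Lemma pset_mem p q : p \in pset p q /\ q \in pset p q.
Proof.
have [s0 [H U <-]] := upath_ex p q.
by rewrite !inE !on_path_tree // mem_head mem_last.
Qed.

End Tree.
Local Open Scope ring_scope.
Section Restr.
Variable V : finType.
Variable e : rel V.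
Hypothesis sym : symmetric e.
Variable R : realFieldType.
Variable delta : R.

Lemma restricted_W (C : {set V}) :
  restricted e delta (edgeH e) C =
  \sum_(p in C) \sum_(q in C | q != p) dpow delta (dist e C p q).
Proof.
set adj := adjH (edgeH e) C.
set Rc := connect adj.
have adj_sym : symmetric adj.
  move=> x y; rewrite /adj /adjH; apply/existsP/existsP => -[S /and4P[SH SC xS yS]];
    by exists S; rewrite SH SC xS yS.
have csym := sym_connect_sym adj_sym.
have eqR : {in C & &, equivalence_rel Rc}.
  move=> x y z _ _ _; split; first exact: connect0.
  move=> Rxy; apply/idP/idP => H.
    by apply: connect_trans H; rewrite /Rc csym.
  exact: connect_trans Rxy H.
have partC : partition (partH (edgeH e) C) C by exact: equivalence_partitionP.
have step : forall p z, p \in C -> z \in C -> e p z -> adj p z.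
  move=> p z pC zC epz; apply/existsP; exists [set p; z].
  rewrite set21 set22 !andbT; apply/andP; split.
    by apply/imset2P; exists p z; rewrite ?inE.
  by apply/subsetP => w; rewrite !inE => /orP[]/eqP ->.
have walk_in : forall st p, path e p st -> all (mem C) (p :: st) -> all (Rc p) st.
  elim=> [//|z st IH] p /= /andP[epz Hst] /and3P[pC zC Ast].
  apply/andP; split; first exact/connect1/step.
  apply/allP => w wst; apply: connect_trans (connect1 (step _ _ pC zC epz)) _.
  by move/allP: (IH z Hst (introT andP (conj zC Ast))) => /(_ w wst).
rewrite /restricted (set_partition_big _ partC).
apply: eq_bigr => B /imsetP [x xC ->] {B}.
set B := [set y in C | connect (adjH (edgeH e) C) x y].
apply: eq_bigr => p pB.
have BC : B \subset C by apply/subsetP => y; rewrite inE => /andP[].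
have Rxp : Rc x p by move: pB; rewrite inE => /andP[].
have Ew : forall q, walkb e C p q =1 walkb e B p q.
  move=> q n; apply/existsP/existsP => -[st /and3P[Hst Lst Ast]]; exists st.
    apply/and3P; split => //; apply/allP => z; rewrite in_cons => /orP[/eqP -> //|zst].
    have := allP Ast z; rewrite in_cons zst orbT => /(_ isT) zC.
    rewrite inE zC /=; apply: connect_trans Rxp _.
    by move/allP: (walk_in _ _ Hst Ast) => /(_ z zst).
  apply/and3P; split => //; apply/allP => z zs; apply: (subsetP BC); exact: (allP Ast).
have Ed : forall q, dist e C p q = dist e B p q.
  by move=> q; rewrite /dist (eq_find (Ew q)).
have Enone : forall q, q \notin B -> dist e B p q = None.
  move=> q qB; rewrite /dist hasNfind ?size_iota ?ltnn //.
  apply/hasPn => n _; apply/negP => /existsP [st /and3P[_ /eqP Lst Ast]].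
  move: qB; rewrite -Lst; move/allP: Ast => H; rewrite H //.
  by rewrite -nth_last; case: st {Lst H} => [[|z s] ?] //=; rewrite ?mem_head // in_cons mem_nth ?orbT.
rewrite /worth big_mkcond [RHS]big_mkcond; apply: eq_bigr => q _.
case qB: (q \in B).
  by rewrite (subsetP BC q qB) /= Ed.
case: (q \in C) => //=; case: (q != p) => //=.
by rewrite Ed Enone ?qB.
Qed.
End Restr.
Theorem mainTheorem3 (V : finType) (e : rel V) (R : realFieldType) (delta : R) :
  is_tree e -> 0 < delta -> delta < 1 ->
  forall i : V,
    shapley (restricted e delta (edgeH e)) i =
    2^-1 * \sum_(p : V) \sum_(q : V | (q != p) && on_path e i p q)
             pair_term delta (dist e [set: V] p q).
Proof.
move=> [[sym _] conn acyc] _ _ i.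
have pmem := pset_mem sym acyc conn.
have Hr : forall C, restricted e delta (edgeH e) C =
   \sum_p \sum_(q | q != p)
      (if pset e p q \subset C then delta ^+ (#|pset e p q|.-1) else 0).
  move=> C; rewrite restricted_W // big_mkcond; apply: eq_bigr => p _.
  case pC: (p \in C).
    rewrite big_mkcond [RHS]big_mkcond; apply: eq_bigr => q _.
    rewrite (pset_dist sym acyc conn).
    case qC: (q \in C) => /=; first by case: (q != p) => //; case: ifP.
    case: (q != p) => //; case: ifP => // /subsetP /(_ q (proj2 (pmem p q))).
    by rewrite qC.
  apply/esym/big1 => q _; case: ifP => // /subsetP /(_ p (proj1 (pmem p q))).
  by rewrite pC.
rewrite (shapley_ext _ Hr) shapley_sum2 mulr_sumr; apply: eq_bigr => p _.
rewrite mulr_sumr big_mkcondr; apply: eq_bigr => q _.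
rewrite unanimity (pset_dist sym acyc conn) subsetT /=.
have -> : on_path e i p q = (i \in pset e p q) by rewrite inE.
case: ifP => // _.
have c0 : (0 < #|pset e p q|)%N by apply/card_gt0P; exists p; exact: (proj1 (pmem p q)).
rewrite prednK //.
have h2 : (2%:R : R) != 0 by rewrite pnatr_eq0.
have hc : (#|pset e p q|%:R : R) != 0 by rewrite pnatr_eq0 -lt0n.
by field.
Qed.
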